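(* Let $(X,\rho)$ be a metric space, $\mu$ a Radon measure on $X$, and $\delta\in\Upsilon(X,\mu)$. There is a linear map $\bar\delta:\mathrm{Lip}_{loc}(X)\to L^\infty_{loc}(X,\mu)$ such that: (1) $\bar\delta f=\delta f$ for all $f\in\mathrm{Lip}_b(X)$; (2) for all $f\in\mathrm{Lip}(X)$ and all balls $B$ in $X$, $\chi_B\,\bar\delta f=\chi_B\,\delta\big((f|_B)^B\big)$; (3) $\bar\delta$ satisfies the Leibniz rule $\bar\delta(fg)=f\,\bar\delta g+g\,\bar\delta f$; (4) if $X$ is separable, then $\|\bar\delta f\|_{L^\infty(\mu)}\le\|\delta\|_{\mathrm{op}}\,L(f)$ for all $f\in\mathrm{Lip}(X)$.
   Context: $\mathrm{Lip}(X)$: real Lipschitz functions on $X$, $L(f)$ the Lipschitz constant; $\mathrm{Lip}_b(X)$: bounded ones, normed by $\|f\|_{\mathrm{Lip}}=\max(\sup|f|,L(f))$; $\mathrm{Lip}_{loc}(X)$: locally Lipschitz functions. A derivation on $(X,\rho,\mu)$ is a linear map $\delta:\mathrm{Lip}_b(X)\to L^\infty(X,\mu)$ with (i) $\delta(fg)=f\delta g+g\delta f$; (ii) whenever a net $(f_\alpha)$ in $\mathrm{Lip}_b(X)$ with $\sup_\alpha\|f_\alpha\|_{\mathrm{Lip}}<\infty$ converges pointwise to $f$, $\delta f_\alpha\to\delta f$ weak-* in $L^\infty(X,\mu)$. $\Upsilon(X,\mu)$ is the set of derivations. For separable $X$ each derivation is bounded and $\|\delta\|_{\mathrm{op}}=\sup\{\|\delta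 f\|_{L^\infty(\mu)}:\|f\|_{\mathrm{Lip}}\le1\}$. For $A\subset X$ and a bounded Lipschitz $g:A\to\mathbb{R}$, the bounded McShane extension is $g^A=\big(F\wedge\sup_A|g|\big)\vee\big(-\sup_A|g|\big)$ where $F(x)=\inf_{a\in A}\{g(a)+L(g)\rho(x,a)\}$; it is a bounded Lipschitz function on $X$ extending $g$ (on the closure of $A$ where applicable) with the same Lipschitz constant and sup norm. *)

(* Defs.v *)
From HB Require Import structures.
From mathcomp Require Import all_boot all_order all_algebra.
From mathcomp Require Import all_classical all_reals all_analysis ess_sup_inf.
Set Implicit Arguments. Unset Strict Implicit. Unset Printing Implicit Defensive.
Import Order.TTheory GRing.Theory Num.Theory.
Import numFieldNormedType.Exports.
Local Open Scope classical_set_scope.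
Local Open Scope ring_scope.

Section Defs.
Context {R : realType} {X : Type} (rho : X -> X -> R).

Definition is_metric : Prop :=
  [/\ forall x y, 0 <= rho x y,
      forall x y, rho x y = 0 <-> x = y,
      forall x y, rho x y = rho y x &
      forall x y z, rho x z <= rho x y + rho y z].

Definition rball (x : X) (r : R) : set X := [set y | rho x y < r].

Definition ropen (A : set X) : Prop :=
  forall x, A x -> exists2 r : R, 0 < r & rball x r `<=` A.

Definition rcompact (K : set X) : Prop :=
  forall (I : Type) (U : I -> set X), (forall i, ropen (U i)) ->
    K `<=` \bigcup_i U i ->
    exists2 F : set I, finite_set F & K `<=` \bigcup_(i in F) U i.

Definition rseparable : Prop :=
  exists D : set X, countable D /\
    forall x (e : R), 0 < e -> exists2 d, D d & rho x d < e.

Definition is_lip_on (A : set X) (f : X -> R) (L : R) : Prop :=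
  0 <= L /\ forall x y, A x -> A y -> `|f x - f y| <= L * rho x y.

Definition Lip (f : X -> R) : Prop := exists L, is_lip_on setT f L.

Definition Lip_b (f : X -> R) : Prop :=
  Lip f /\ exists M : R, forall x, `|f x| <= M.

Definition Lip_loc (f : X -> R) : Prop :=
  forall x, exists2 r : R, 0 < r & exists L, is_lip_on (rball x r) f L.

Definition lipc_on (A : set X) (f : X -> R) : R := inf [set L | is_lip_on A f L].
Definition lipc (f : X -> R) : R := lipc_on setT f.

Definition supnorm_on (A : set X) (f : X -> R) : R := sup [set `|f a| | a in A].

Definition lipnorm (f : X -> R) : R := Num.max (supnorm_on setT f) (lipc f).

(* bounded McShane extension g^A of g|_A *)
Definition mcshane (A : set X) (g : X -> R) (x : X) : R :=
  let M := supnorm_on A g in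
  let F := inf [set g a + lipc_on A g * rho x a | a in A] in
  Num.max (Num.min F M) (- M).

Definition directed (I : Type) (le : I -> I -> Prop) : Prop :=
  [/\ exists i : I, True, forall i, le i i,
      forall i j k, le i j -> le j k -> le i k &
      forall i j, exists k, le i k /\ le j k].

Definition net_cvg (I : Type) (le : I -> I -> Prop) (u : I -> R) (l : R) : Prop :=
  forall e : R, 0 < e -> exists i0, forall i, le i0 i -> `|u i - l| < e.

End Defs.

Section MeasDefs.
Context {R : realType} {d : measure_display} {X : measurableType d}
  (rho : X -> X -> R) (mu : {measure set X -> \bar R}).

Definition borel_rho : Prop := @measurable d X = <<s ropen rho >>.

Definition radon : Prop :=
  (forall x, exists2 r : R, 0 < r & (mu (rball rho x r) < +oo)%E) /\
  (forall A, measurable A ->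
     mu A = ereal_sup [set mu K | K in [set K | K `<=` A /\ rcompact rho K]]).

Definition Linf (h : X -> R) : Prop :=
  measurable_fun setT h /\ exists M : R, {ae mu, forall x, `|h x| <= M}.

Definition Linf_loc (h : X -> R) : Prop :=
  measurable_fun setT h /\
  forall x, exists2 r : R, 0 < r &
    exists M : R, {ae mu, forall y, rball rho x r y -> `|h y| <= M}.

Definition Linf_norm (h : X -> R) : \bar R := ess_sup mu (fun x => (`|h x|)%:E).

Definition weakstar_cvg (I : Type) (le : I -> I -> Prop) (hs : I -> X -> R)
    (h : X -> R) : Prop :=
  forall g : X -> R, mu.-integrable setT (EFin \o g) ->
    net_cvg le (fun i => Rintegral mu setT (fun x => hs i x * g x))
               (Rintegral mu setT (fun x => h x * g x)).

(* derivations: delta : Lip_b(X) -> L^infty(X, mu); values are taken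
   as representatives, equalities holding mu-a.e. *)
Definition derivation (delta : (X -> R) -> (X -> R)) : Prop :=
  [/\ forall f, Lip_b rho f -> Linf (delta f),
      forall f g (a b : R), Lip_b rho f -> Lip_b rho g ->
        {ae mu, forall x, delta (fun y => a * f y + b * g y) x
                          = a * delta f x + b * delta g x},
      forall f g, Lip_b rho f -> Lip_b rho g ->
        {ae mu, forall x, delta (fun y => f y * g y) x
                          = f x * delta g x + g x * delta f x} &
      forall (I : Type) (le : I -> I -> Prop) (fs : I -> X -> R) (f : X -> R),
        directed le -> (forall i, Lip_b rho (fs i)) ->
        (exists C : R, forall i, lipnorm rho (fs i) <= C) ->
        Lip_b rho f -> (forall x, net_cvg le (fun i => fs i x) (f x)) ->
        weakstar_cvg le (fun i => delta (fs i)) (delta f)].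

Definition opnorm (delta : (X -> R) -> (X -> R)) : \bar R :=
  ereal_sup [set Linf_norm (delta f) |
             f in [set f | Lip_b rho f /\ lipnorm rho f <= 1]].

End MeasDefs.

(* Main.v *)
Require Import Defs.
From HB Require Import structures.
From mathcomp Require Import all_boot all_order all_algebra.
From mathcomp Require Import all_classical all_reals all_analysis ess_sup_inf.
From mathcomp Require Import measurable_realfun.
From mathcomp Require Import ring lra.
Import Order.TTheory GRing.Theory Num.Theory.
Import numFieldNormedType.Exports.
Local Open Scope classical_set_scope.
Local Open Scope ring_scope.

Section Clamp.
Context {R : realType}.
Ltac normb h := try (move/negbT: h; rewrite -leNgt => h).
Lemma min_dist (s t a : R) : `|Num.min s a - Num.min t a| <= `|s - t|.
Proof.
rewrite /Num.min /Order.min; case: ifP => h1; case: ifP => h2; normb h1; normb h2;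
rewrite ler_norml; (have [h|h] := lerP 0 (s - t); [rewrite ger0_norm // | rewrite ltr0_norm //]);
apply/andP; split; lra.
Qed.
Lemma max_dist (s t a : R) : `|Num.max s a - Num.max t a| <= `|s - t|.
Proof.
rewrite /Num.max /Order.max; case: ifP => h1; case: ifP => h2; normb h1; normb h2;
rewrite ler_norml; (have [h|h] := lerP 0 (s - t); [rewrite ger0_norm // | rewrite ltr0_norm //]);
apply/andP; split; lra.
Qed.
Definition clamp (M t : R) := Num.max (Num.min t M) (- M).
Lemma clamp_dist M s t : `|clamp M s - clamp M t| <= `|s - t|.
Proof. exact: le_trans (max_dist _ _ _) (min_dist _ _ _). Qed.
Lemma clamp_bound M t : 0 <= M -> `|clamp M t| <= M.
Proof.
move=> M0; rewrite /clamp /Num.max /Num.min /Order.max /Order.min.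
case: (ltP t M) => h1; case: ifP => h2; normb h2; rewrite ler_norml; apply/andP; split; lra.
Qed.
Lemma clamp_id M t : `|t| <= M -> clamp M t = t.
Proof.
rewrite ler_norml => /andP[h1 h2]; rewrite /clamp /Num.max /Num.min /Order.max /Order.min.
case: (ltP t M) => h3; case: ifP => h4; normb h4; lra.
Qed.
End Clamp.

Set Implicit Arguments. Unset Strict Implicit. Unset Printing Implicit Defensive.


Section Metric.
Context {R : realType} {X : Type} (rho : X -> X -> R) (hm : is_metric rho).

Lemma rho_ge0 x y : 0 <= rho x y. Proof. by case: hm. Qed.
Lemma rho0 x : rho x x = 0. Proof. by case: hm => _ h _ _; apply/h. Qed.
Lemma rho_sym x y : rho x y = rho y x. Proof. by case: hm. Qed.
Lemma rho_tri x y z : rho x z <= rho x y + rho y z. Proof. by case: hm. Qed.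

Definition infc (A : set X) (g : X -> R) (c : R) (x : X) :=
  inf [set g a + c * rho x a | a in A].

Lemma infc_le A g c lo x a : 0 <= c -> (forall a, A a -> lo <= g a) -> A a ->
  infc A g c x <= g a + c * rho x a.
Proof.
move=> c0 hlo Aa; apply: ge_inf; last by exists a.
exists lo => _ [b Ab <-]; have := hlo b Ab; have := rho_ge0 x b.
by move=> h1 h2; have := mulr_ge0 c0 h1; lra.
Qed.

Lemma infc_ge A g c x m a0 : A a0 -> (forall a, A a -> m <= g a + c * rho x a) ->
  m <= infc A g c x.
Proof.
move=> A0 h; apply: lb_le_inf; first by exists (g a0 + c * rho x a0), a0.
by move=> _ [b Ab <-]; exact: h.
Qed.

Lemma infc_lo A g c lo x a0 : 0 <= c -> A a0 -> (forall a, A a -> lo <= g a) ->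
  lo <= infc A g c x.
Proof.
move=> c0 A0 hlo; apply: (infc_ge A0) => a Aa; have := hlo a Aa.
have := mulr_ge0 c0 (rho_ge0 x a); lra.
Qed.

Lemma infc_lip1 A g c lo a0 x y : 0 <= c -> A a0 -> (forall a, A a -> lo <= g a) ->
  infc A g c x <= infc A g c y + c * rho x y.
Proof.
move=> c0 A0 hlo; rewrite -lerBlDr; apply: (infc_ge A0) => a Aa.
have h1 := infc_le x c0 hlo Aa.
have h2 : c * rho x a <= c * rho x y + c * rho y a.
  by rewrite -mulrDr; apply: ler_wpM2l => //; exact: rho_tri.
lra.
Qed.

Lemma infc_dist A g c lo a0 x y : 0 <= c -> A a0 -> (forall a, A a -> lo <= g a) ->
  `|infc A g c x - infc A g c y| <= c * rho x y.
Proof.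
move=> c0 A0 hlo; have h1 := infc_lip1 x y c0 A0 hlo.
have h2 := infc_lip1 y x c0 A0 hlo; rewrite rho_sym in h2.
rewrite ler_norml; apply/andP; split; lra.
Qed.

Definition LB (f : X -> R) := exists L M : R,
  [/\ 0 <= L, 0 <= M, forall x y, `|f x - f y| <= L * rho x y & forall x, `|f x| <= M].

Lemma LB_Lip_b f : LB f <-> Lip_b rho f.
Proof.
split.
  by move=> [L [M [L0 M0 hL hM]]]; split; [exists L; split => // x y _ _; exact: hL|exists M].
move=> [[L [L0 hL]] [M hM]]; exists L, `|M|; split => //.
  by move=> x y; exact: hL.
by move=> x; apply: le_trans (hM x) (ler_norm _).
Qed.

Lemma LB_cst c : LB (fun _ => c).
Proof.
exists 0, `|c|; split => // x y; by rewrite subrr normr0 mul0r.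
Qed.

Lemma LB_lin a b f g : LB f -> LB g -> LB (fun y => a * f y + b * g y).
Proof.
move=> [L1 [M1 [L10 M10 h1 k1]]] [L2 [M2 [L20 M20 h2 k2]]].
exists (`|a| * L1 + `|b| * L2), (`|a| * M1 + `|b| * M2); split.
- by rewrite addr_ge0 // mulr_ge0.
- by rewrite addr_ge0 // mulr_ge0.
- move=> x y; have -> : a * f x + b * g x - (a * f y + b * g y) =
     a * (f x - f y) + b * (g x - g y) by ring.
  apply: le_trans (ler_normD _ _) _; rewrite !normrM mulrDl -!mulrA.
  by apply: lerD; apply: ler_wpM2l => //.
- move=> x; apply: le_trans (ler_normD _ _) _; rewrite !normrM.
  by apply: lerD; apply: ler_wpM2l => //.
Qed.

Lemma LB_mul f g : LB f -> LB g -> LB (fun y => f y * g y).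
Proof.
move=> [L1 [M1 [L10 M10 h1 k1]]] [L2 [M2 [L20 M20 h2 k2]]].
exists (M1 * L2 + M2 * L1), (M1 * M2); split.
- by rewrite addr_ge0 // mulr_ge0.
- by rewrite mulr_ge0.
- move=> x y; have -> : f x * g x - f y * g y =
     f x * (g x - g y) + g y * (f x - f y) by ring.
  apply: le_trans (ler_normD _ _) _; rewrite !normrM mulrDl -!mulrA.
  by apply: lerD; apply: ler_pM => //.
- by move=> x; rewrite normrM; apply: ler_pM.
Qed.

Lemma LB_comp (phi : R -> R) K B f : 0 <= K -> 0 <= B ->
  (forall s t, `|phi s - phi t| <= K * `|s - t|) -> (forall s, `|phi s| <= B) ->
  Lip rho f -> LB (fun y => phi (f y)).
Proof.
move=> K0 B0 hK hB [L [L0 hL]]; exists (K * L), B; split => //.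
- exact: mulr_ge0.
- move=> x y; apply: le_trans (hK _ _) _; rewrite -mulrA; apply: ler_wpM2l => //.
  exact: hL.
Qed.

Lemma LB_Lip f : LB f -> Lip rho f.
Proof. by move/LB_Lip_b => []. Qed.

Lemma LB_clamp M f : 0 <= M -> Lip rho f -> LB (fun y => clamp M (f y)).
Proof.
move=> M0; apply: (LB_comp (K := 1) (B := M)) => //.
  by move=> s t; rewrite mul1r; exact: clamp_dist.
by move=> s; exact: clamp_bound.
Qed.

End Metric.


Section Reg.
Context {R : realType} {X : Type} (rho : X -> X -> R) (hm : is_metric rho).

Definition Fn (f : X -> R) (n : nat) :=
  infc rho setT (fun y => clamp n%:R (f y)) (n%:R * n%:R).

Lemma Fn_LB f n : LB rho (Fn f n).
Proof.
have c0 : 0 <= (n%:R * n%:R : R) by rewrite mulr_ge0.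
have n0 : 0 <= (n%:R : R) by [].
have hlo : forall a, setT a -> - n%:R <= clamp n%:R (f a).
  by move=> a _; have := clamp_bound n%:R (f a) n0; rewrite ler_norml => /andP[].
exists (n%:R * n%:R), n%:R; split => //.
- move=> x y; exact: (infc_dist hm _ _ c0 (I : setT x) hlo).
- move=> x; rewrite ler_norml; apply/andP; split.
    exact: (infc_lo hm _ c0 (I : setT x) hlo).
  apply: le_trans (infc_le hm _ c0 hlo (I : setT x)) _.
  rewrite (rho0 hm) ?mulr0 ?addr0.
  have := clamp_bound n%:R (f x) n0.
  by rewrite ler_norml => /andP[].
Qed.

Definition W (f : X -> R) (n : nat) : set X :=
  [set x | exists2 s : R, 0 < s & forall m, (n <= m)%N ->
     forall y, rball rho x s y -> Fn f m y = f y].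

Lemma W_open f n : ropen rho (W f n).
Proof.
move=> x [s s0 hs]; exists s => // y /= hy; exists (s - rho x y); first by move: hy; rewrite /rball /=; lra.
move=> m nm z /= hz; apply: hs => //=.
move: hz; rewrite /rball /=; have := rho_tri hm x y z; lra.
Qed.

Lemma W_mono f n m : (n <= m)%N -> W f n `<=` W f m.
Proof.
move=> nm x [s s0 hs]; exists s => // k mk; apply: hs.
exact: leq_trans mk.
Qed.

Lemma W_Fn f n x : W f n x -> Fn f n x = f x.
Proof.
by move=> [s s0 hs]; apply: hs => //; rewrite /rball /= (rho0 hm).
Qed.

Lemma W_cover f : Lip_loc rho f -> forall x, exists n, W f n x.
Proof.
move=> hf x; have [r r0 [L [L0 hL]]] := hf x.
set K := `|f x| + L * r.
have K0 : 0 <= K by rewrite addr_ge0 // mulr_ge0 // ltW.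
set B := 1 + K + L + 2 * (1 + K) / r.
have hdiv : 0 <= 2 * (1 + K) / r.
  by apply: divr_ge0; [lra | exact: ltW].
have B0 : 0 <= B by rewrite /B; lra.
exists (Num.bound B), (r / 2); first by lra.
move=> m hm' y hy; move: hy; rewrite /rball /= => hy.
set n : R := m%:R.
have hn : B < n.
  apply: lt_le_trans (archi_boundP B0) _; by rewrite /n ler_nat.
have xin : rball rho x r x by rewrite /rball /= (rho0 hm).
have yin : rball rho x r y by rewrite /rball /=; lra.
have fbound : forall z, rball rho x r z -> `|f z| <= K.
  move=> z zin; have h := hL z x zin xin; rewrite (rho_sym hm) in h.
  have h2 : L * rho x z <= L * r.
    by apply: ler_wpM2l => //; move: zin; rewrite /rball /=; lra.
  have := ler_normD (f z - f x) (f x); rewrite subrK /K; lra.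
have fyK := fbound y yin.
have hnr : 2 * (1 + K) <= n * r.
  have : 2 * (1 + K) / r * r = 2 * (1 + K) by rewrite divfK // gt_eqF.
  have : 2 * (1 + K) / r * r <= n * r.
    apply: ler_wpM2r; first exact: ltW.
    rewrite /B in hn; lra.
  lra.
have n1 : 1 <= n by rewrite /B in hn; lra.
have nK : K <= n by rewrite /B in hn; lra.
have nL : L <= n by rewrite /B in hn; lra.
have c0 : 0 <= n * n by rewrite mulr_ge0 //; lra.
have hlo : forall a, setT a -> - n <= clamp n (f a).
  by move=> a _; have := @clamp_bound R n (f a) (ltac:(lra)); rewrite ler_norml => /andP[].
apply/eqP; rewrite eq_le; apply/andP; split.
- apply: le_trans (infc_le hm _ c0 hlo (I : setT y)) _.
  by rewrite (rho0 hm) mulr0 addr0 clamp_id //; lra.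
- apply: (infc_ge (I : setT y)) => z _.
  have [zin|zout] := ltP (rho x z) r.
    have hz : `|f z| <= K by apply: fbound.
    rewrite clamp_id; last by lra.
    have := hL y z yin zin; rewrite ler_norml => /andP[_ h].
    have : L * rho y z <= n * n * rho y z.
      have := rho_ge0 hm y z; have : L <= n * n by nra.
      nra.
    lra.
  have hyz : r / 2 <= rho y z by have := rho_tri hm x y z; lra.
  have := hlo z I.
  have : n * n * (r / 2) <= n * n * rho y z by apply: ler_wpM2l.
  have : n + K <= n * n * (r / 2).
    have : n * (1 + K) <= n * (n * (r/2)) by apply: ler_wpM2l; lra.
    nra.
  have : f y <= K by move: fyK; rewrite ler_norml => /andP[].
  lra.
Qed.

End Reg.


Section Bump.
Context {R : realType} {X : Type} (rho : X -> X -> R) (hm : is_metric rho).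

Definition bumpf (U : set X) (x : X) : R :=
  if pselect (exists c, ~ U c) then Num.min (infc rho (~` U) (fun _ => 0) 1 x) 1 else 1.

Lemma bumpf_LB U : LB rho (bumpf U).
Proof.
rewrite /bumpf; destruct (pselect (exists c, ~ U c)) as [ex|nex]; [have [c Uc] := ex|]; last exact: LB_cst.
have hlo : forall a, (~` U) a -> (0:R) <= (fun _ => 0) a by [].
exists 1, 1; split => //.
- move=> x y; apply: le_trans (min_dist _ _ _) _.
  exact: (infc_dist hm _ _ ler01 (Uc : (~` U) c) hlo).
- move=> x; have h0 := infc_lo hm x ler01 (Uc : (~` U) c) hlo.
  rewrite ler_norml; apply/andP; split.
    by rewrite le_min; apply/andP; split; lra.
  by rewrite ge_min lexx orbT.
Qed.

Lemma bumpf_pos U x : ropen rho U -> U x -> 0 < bumpf U x.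
Proof.
move=> oU Ux; rewrite /bumpf; destruct (pselect (exists c, ~ U c)) as [ex|nex]; [have [c Uc] := ex|]; last exact: ltr01.
have [r r0 hr] := oU x Ux.
have hlo : forall a, (~` U) a -> (0:R) <= (fun _ => 0) a by [].
rewrite lt_min ltr01 andbT; apply: lt_le_trans r0 _.
apply: (infc_ge (Uc : (~` U) c)) => a Ua; rewrite add0r mul1r.
by rewrite leNgt; apply/negP => h; apply: Ua; apply: hr.
Qed.

Lemma bumpf_zero U x : ~ U x -> bumpf U x = 0.
Proof.
move=> Ux; rewrite /bumpf; destruct (pselect (exists c, ~ U c)) as [ex|h]; [have [c Uc] := ex|]; last by exfalso; apply: h; exists x.
have hlo : forall a, (~` U) a -> (0:R) <= (fun _ => 0) a by [].
have h1 := infc_le hm x ler01 hlo (Ux : (~` U) x).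
have h0 := infc_lo hm x ler01 (Uc : (~` U) c) hlo.
rewrite (rho0 hm) mulr0 addr0 in h1.
have -> : infc rho (~` U) (fun _ => 0) 1 x = 0 by apply/eqP; rewrite eq_le h1 h0.
by rewrite /Num.min /Order.min ltr01.
Qed.

End Bump.

Section Loc.
Context {R : realType} {d : measure_display} {X : measurableType d}
  (rho : X -> X -> R) (mu : {measure set X -> \bar R})
  (delta : (X -> R) -> (X -> R)) (hm : is_metric rho) (hd : derivation rho mu delta).

Lemma der_lin f g a b : LB rho f -> LB rho g ->
  {ae mu, forall x, delta (fun y => a * f y + b * g y) x = a * delta f x + b * delta g x}.
Proof. by case: hd => _ h _ _ /LB_Lip_b hf /LB_Lip_b hg; exact: h. Qed.

Lemma der_mul f g : LB rho f -> LB rho g ->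
  {ae mu, forall x, delta (fun y => f y * g y) x = f x * delta g x + g x * delta f x}.
Proof. by case: hd => _ _ h _ /LB_Lip_b hf /LB_Lip_b hg; exact: h. Qed.

Lemma der_zero : {ae mu, forall x, delta (fun _ => 0) x = 0}.
Proof.
have := der_lin 0 0 (LB_cst rho 0) (LB_cst rho 0).
have -> : (fun y : X => 0 * (fun _ => (0:R)) y + 0 * (fun _ => 0) y) = (fun _ => 0).
  by apply: funext => y; rewrite mul0r addr0.
by apply: filterS => x ->; rewrite !mul0r addr0.
Qed.

Lemma der_one : {ae mu, forall x, delta (fun _ => 1) x = 0}.
Proof.
have := der_mul (LB_cst rho 1) (LB_cst rho 1).
have -> : (fun y : X => (fun _ => (1:R)) y * (fun _ => 1) y) = (fun _ => 1).
  by apply: funext => y; rewrite mulr1.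
by apply: filterS => x; rewrite !mul1r; lra.
Qed.

Lemma der_loc U g h : ropen rho U -> LB rho g -> LB rho h ->
  (forall x, U x -> g x = h x) -> {ae mu, forall x, U x -> delta g x = delta h x}.
Proof.
move=> oU hg hh gh.
set p := fun y => 1 * g y + (-1) * h y.
have hp : LB rho p by apply: LB_lin.
have hk := bumpf_LB hm U.
have H1 := der_mul hp hk.
have E : (fun y => p y * bumpf rho U y) = (fun _ => 0).
  apply: funext => y; have [Uy|Uy] := pselect (U y).
    by rewrite /p gh // mul1r mulN1r subrr mul0r.
  by rewrite bumpf_zero // mulr0.
rewrite E in H1.
have H2 := der_lin 1 (-1) hg hh.
move: H1 H2 der_zero; apply: filterS3 => x e1 e2 e0 Ux.
have px : p x = 0 by rewrite /p gh // mul1r mulN1r subrr.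
rewrite e0 px mul0r add0r in e1.
have kx := bumpf_pos oU Ux.
have : delta p x = 0.
  by move/esym/eqP: e1; rewrite mulf_eq0 (gt_eqF kx) /= => /eqP.
rewrite /p e2 mul1r mulN1r => /eqP; rewrite subr_eq0 => /eqP.
exact.
Qed.

End Loc.


Lemma esup_evcst {R : realType} (u : nat -> R) n c :
  (forall m, (n <= m)%N -> u m = c) -> fine (limn_esup (fun m => (u m)%:E)) = c.
Proof.
move=> h.
have hc : (fun m => (u m)%:E) @ \oo --> c%:E.
  by apply: cvg_near_cst; exists n => // m /= nm; rewrite h.
rewrite is_cvg_limn_esupE; last exact: (cvgP _ hc).
by rewrite (cvg_lim _ hc).
Qed.

Section Main.
Context {R : realType} {d : measure_display} {X : measurableType d}
  (rho : X -> X -> R) (mu : {measure set X -> \bar R})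
  (delta : (X -> R) -> (X -> R)) (hm : is_metric rho) (hd : derivation rho mu delta).

Definition dbarf (f : X -> R) (x : X) : R :=
  fine (limn_esup (fun n => (delta (Fn rho f n) x)%:E)).
Local Notation dbar := dbarf.

Lemma W_eq f n m x : (n <= m)%N -> W rho f n x -> Fn rho f m x = f x.
Proof. by move=> nm [s s0 hs]; apply: hs => //; rewrite /rball /= (rho0 hm). Qed.

Lemma ropen_setI (A B : set X) : ropen rho A -> ropen rho B -> ropen rho (A `&` B).
Proof.
move=> oA oB x [Ax Bx]; have [r1 r10 h1] := oA x Ax; have [r2 r20 h2] := oB x Bx.
exists (Num.min r1 r2); first by rewrite lt_min r10 r20.
move=> y; rewrite /rball /= lt_min => /andP[y1 y2]; split.
  by apply: h1. by apply: h2.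
Qed.

Lemma ropen_ball x0 r : ropen rho (rball rho x0 r).
Proof.
move=> y; rewrite /rball /= => hy; exists (r - rho x0 y); first lra.
move=> z; rewrite /rball /= => hz; have := rho_tri hm x0 y z; lra.
Qed.

Lemma ropenT : ropen rho setT.
Proof. by move=> x _; exists 1 => //. Qed.

Lemma dbarE f : {ae mu, forall x, forall n, W rho f n x -> dbar f x = delta (Fn rho f n) x}.
Proof.
have H : forall n, {ae mu, forall x, forall m, (n <= m)%N -> W rho f n x ->
    delta (Fn rho f m) x = delta (Fn rho f n) x}.
  move=> n; apply: ae_foralln => m.
  have [nm|nm] := boolP (n <= m)%N; last first.
    by apply: aeW => x.
  have E : forall y, W rho f n y -> Fn rho f m y = Fn rho f n y.
    by move=> y Wy; rewrite (W_eq nm Wy) (W_eq (leqnn n) Wy).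
  have := der_loc hm hd (W_open hm (f:=f) (n:=n)) (Fn_LB hm f m) (Fn_LB hm f n) E.
  by apply: filterS => x hx _ Wx; apply: hx.
have := ae_foralln H; apply: filterS => x hx n Wx.
rewrite /dbarf (@esup_evcst _ _ n (delta (Fn rho f n) x)) //.
by move=> m nm; apply: hx.
Qed.


Lemma dbar_loc f U g : Lip_loc rho f -> ropen rho U -> LB rho g ->
  (forall x, U x -> g x = f x) -> {ae mu, forall x, U x -> dbar f x = delta g x}.
Proof.
move=> hf oU hg gf.
have H : forall n, {ae mu, forall x, (U `&` W rho f n) x -> delta (Fn rho f n) x = delta g x}.
  move=> n; apply: (der_loc hm hd (ropen_setI oU (W_open hm (f:=f) (n:=n))) (Fn_LB hm f n) hg).
  by move=> y [Uy Wy]; rewrite (W_eq (leqnn n) Wy) gf.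
have := ae_foralln H; have := dbarE f; apply: filterS2 => x e1 e2 Ux.
have [n Wn] := W_cover hm hf x.
by rewrite (e1 n Wn) e2.
Qed.

Lemma Lip_loc_bd f x : Lip_loc rho f -> exists2 r : R, 0 < r & exists L M : R,
  [/\ 0 <= L, 0 <= M, forall y z, rball rho x r y -> rball rho x r z ->
      `|f y - f z| <= L * rho y z & forall y, rball rho x r y -> `|f y| <= M].
Proof.
move=> hf; have [r r0 [L [L0 hL]]] := hf x.
exists r => //; exists L, (`|f x| + L * r); split => //.
- by rewrite addr_ge0 // mulr_ge0 // ltW.
- move=> y yin; have xin : rball rho x r x by rewrite /rball /= (rho0 hm).
  have h := hL y x yin xin; rewrite (rho_sym hm) in h.
  have h2 : L * rho x y <= L * r.
    by apply: ler_wpM2l => //; move: yin; rewrite /rball /=; lra.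
  have := ler_normD (f y - f x) (f x); rewrite subrK; lra.
Qed.

Lemma Lip_Lip_loc f : Lip rho f -> Lip_loc rho f.
Proof. by move=> [L [L0 hL]] x; exists 1 => //; exists L; split => // y z _ _; apply: hL. Qed.

Lemma Lip_loc_lin f g a b : Lip_loc rho f -> Lip_loc rho g ->
  Lip_loc rho (fun y => a * f y + b * g y).
Proof.
move=> hf hg x; have [r1 r10 [L1 [M1 [L10 M10 h1 k1]]]] := Lip_loc_bd x hf.
have [r2 r20 [L2 [M2 [L20 M20 h2 k2]]]] := Lip_loc_bd x hg.
exists (Num.min r1 r2); first by rewrite lt_min r10 r20.
exists (`|a| * L1 + `|b| * L2); split; first by rewrite addr_ge0 // mulr_ge0.
move=> y z; rewrite /rball /= !lt_min => /andP[y1 y2] /andP[z1 z2].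
have -> : a * f y + b * g y - (a * f z + b * g z) =
     a * (f y - f z) + b * (g y - g z) by ring.
apply: le_trans (ler_normD _ _) _; rewrite !normrM mulrDl -!mulrA.
by apply: lerD; apply: ler_wpM2l => //; [apply: h1|apply: h2].
Qed.

Lemma Lip_loc_mul f g : Lip_loc rho f -> Lip_loc rho g ->
  Lip_loc rho (fun y => f y * g y).
Proof.
move=> hf hg x; have [r1 r10 [L1 [M1 [L10 M10 h1 k1]]]] := Lip_loc_bd x hf.
have [r2 r20 [L2 [M2 [L20 M20 h2 k2]]]] := Lip_loc_bd x hg.
exists (Num.min r1 r2); first by rewrite lt_min r10 r20.
exists (M1 * L2 + M2 * L1); split; first by rewrite addr_ge0 // mulr_ge0.
move=> y z; rewrite /rball /= !lt_min => /andP[y1 y2] /andP[z1 z2].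
have -> : f y * g y - f z * g z = f y * (g y - g z) + g z * (f y - f z) by ring.
apply: le_trans (ler_normD _ _) _; rewrite !normrM mulrDl -!mulrA.
by apply: lerD; apply: ler_pM => //; [apply: k1|apply: h2|apply: k2|apply: h1].
Qed.

End Main.


Section Main2.
Context {R : realType} {d : measure_display} {X : measurableType d}
  (rho : X -> X -> R) (mu : {measure set X -> \bar R})
  (delta : (X -> R) -> (X -> R)) (hm : is_metric rho) (hd : derivation rho mu delta).

Local Notation dbar := (dbarf rho delta).

Lemma dbar_lin f g a b : Lip_loc rho f -> Lip_loc rho g ->
  {ae mu, forall x, dbar (fun y => a * f y + b * g y) x = a * dbar f x + b * dbar g x}.
Proof.
move=> hf hg; set h := fun y => a * f y + b * g y.
have hh : Lip_loc rho h by apply: Lip_loc_lin.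
have H : forall n, {ae mu, forall x, (W rho f n `&` W rho g n) x ->
    dbar h x = a * delta (Fn rho f n) x + b * delta (Fn rho g n) x}.
  move=> n.
  have E : forall y, (W rho f n `&` W rho g n) y ->
      (fun y => a * Fn rho f n y + b * Fn rho g n y) y = h y.
    by move=> y [Wf Wg]; rewrite /h /= (W_eq hm (leqnn n) Wf) (W_eq hm (leqnn n) Wg).
  have e1 := dbar_loc hm hd hh (ropen_setI (W_open hm (f:=f) (n:=n)) (W_open hm (f:=g) (n:=n)))
    (LB_lin a b (Fn_LB hm f n) (Fn_LB hm g n)) E.
  have e2 := der_lin hd a b (Fn_LB hm f n) (Fn_LB hm g n).
  by move: e1 e2; apply: filterS2 => x e1 e2 Wx; rewrite e1 // e2.
have := ae_foralln H; have := dbarE hm hd f; have := dbarE hm hd g.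
apply: filterS3 => x eg ef eH.
have [n1 W1] := W_cover hm hf x; have [n2 W2] := W_cover hm hg x.
have Wf := W_mono (leq_maxl n1 n2) W1; have Wg := W_mono (leq_maxr n1 n2) W2.
by rewrite (eH _ (conj Wf Wg)) (ef _ Wf) (eg _ Wg).
Qed.

Lemma dbar_mul f g : Lip_loc rho f -> Lip_loc rho g ->
  {ae mu, forall x, dbar (fun y => f y * g y) x = f x * dbar g x + g x * dbar f x}.
Proof.
move=> hf hg; set h := fun y => f y * g y.
have hh : Lip_loc rho h by apply: Lip_loc_mul.
have H : forall n, {ae mu, forall x, (W rho f n `&` W rho g n) x ->
    dbar h x = Fn rho f n x * delta (Fn rho g n) x + Fn rho g n x * delta (Fn rho f n) x}.
  move=> n.
  have E : forall y, (W rho f n `&` W rho g n) y ->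
      (fun y => Fn rho f n y * Fn rho g n y) y = h y.
    by move=> y [Wf Wg]; rewrite /h /= (W_eq hm (leqnn n) Wf) (W_eq hm (leqnn n) Wg).
  have e1 := dbar_loc hm hd hh (ropen_setI (W_open hm (f:=f) (n:=n)) (W_open hm (f:=g) (n:=n)))
    (LB_mul (Fn_LB hm f n) (Fn_LB hm g n)) E.
  have e2 := der_mul hd (Fn_LB hm f n) (Fn_LB hm g n).
  by move: e1 e2; apply: filterS2 => x e1 e2 Wx; rewrite e1 // e2.
have := ae_foralln H; have := dbarE hm hd f; have := dbarE hm hd g.
apply: filterS3 => x eg ef eH.
have [n1 W1] := W_cover hm hf x; have [n2 W2] := W_cover hm hg x.
have Wf := W_mono (leq_maxl n1 n2) W1; have Wg := W_mono (leq_maxr n1 n2) W2.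
rewrite (eH _ (conj Wf Wg)) (ef _ Wf) (eg _ Wg).
by rewrite (W_eq hm (leqnn _) Wf) (W_eq hm (leqnn _) Wg).
Qed.

Lemma dbar_Linf_loc f : Lip_loc rho f -> Linf_loc rho mu (dbar f).
Proof.
move=> hf; have hL : forall n, Linf mu (delta (Fn rho f n)).
  by move=> n; case: hd => h _ _ _; apply: h; apply/LB_Lip_b; exact: Fn_LB.
split.
  rewrite /dbarf.
  have hm1 : measurable_fun [set: X] (fun x : X => (limn_esup (fun n => ((delta (Fn rho f n) x)%:E : \bar R)) : \bar R)).
    apply: measurable_fun_limn_esup => n; apply/measurable_EFinP.
    by case: (hL n).
  exact: (measurableT_comp (fine_measurable _) hm1).
move=> x; have [n Wn] := W_cover hm hf x.
have [s s0 hs] := W_open hm Wn.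
exists s => //; have [_ [M hM]] := hL n; exists M.
move: hM (dbarE hm hd f); apply: filterS2 => y hy e By.
by rewrite (e n (hs y By)).
Qed.

End Main2.


Section Mc.
Context {R : realType} {X : Type} (rho : X -> X -> R) (hm : is_metric rho).

Lemma lipc_att A f L0 : is_lip_on rho A f L0 -> is_lip_on rho A f (lipc_on rho A f).
Proof.
move=> hL0; set S := [set L | is_lip_on rho A f L].
have S0 : S !=set0 by exists L0.
rewrite /is_lip_on /lipc_on -/S; split.
apply: (lb_le_inf S0).
  by move=> L [].
move=> x y Ax Ay; have [r0|rpos] := eqVneq (rho x y) 0.
  have xy : x = y by case: hm => _ h _ _; apply/h.
  by rewrite r0 mulr0 xy subrr normr0.
have rp : 0 < rho x y by rewrite lt_neqAle eq_sym rpos (rho_ge0 hm).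
rewrite -ler_pdivrMr //; apply: (lb_le_inf S0) => L [_ hL].
by rewrite ler_pdivrMr //; apply: hL.
Qed.

Lemma mcshane_props f x0 r : Lip rho f -> 0 < r ->
  LB rho (mcshane rho (rball rho x0 r) f) /\
  forall x, rball rho x0 r x -> mcshane rho (rball rho x0 r) f x = f x.
Proof.
move=> [L [L0 hL]] r0; set B := rball rho x0 r.
have Bx0 : B x0 by rewrite /B /rball /= (rho0 hm).
have hLB : is_lip_on rho B f L by split => // x y _ _; apply: hL.
have [Lc0 hLc] := lipc_att hLB; set Lc := lipc_on rho B f.
set M := supnorm_on B f.
have Mub : forall a, B a -> `|f a| <= M.
  move=> a Ba; apply: ub_le_sup; last by exists a.
  exists (`|f x0| + L * r) => _ [b Bb <-].
  have h := hL b x0 I I.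
  have h2 : L * rho b x0 <= L * r.
    by apply: ler_wpM2l => //; move: Bb; rewrite /B /rball /= (rho_sym hm); lra.
  have := ler_normD (f b - f x0) (f x0); rewrite subrK; lra.
have M0 : 0 <= M by apply: le_trans (normr_ge0 (f x0)) (Mub x0 Bx0).
have hlo : forall a, B a -> - M <= f a.
  by move=> a Ba; have := Mub a Ba; rewrite ler_norml => /andP[].
have -> : mcshane rho B f = fun x => clamp M (infc rho B f Lc x) by [].
split.
- apply: LB_clamp M0 _; exists Lc; split => // x y _ _.
  exact: (infc_dist hm _ _ Lc0 Bx0 hlo).
- move=> x Bx.
  have -> : infc rho B f Lc x = f x.
    apply/eqP; rewrite eq_le; apply/andP; split.
      by apply: le_trans (infc_le hm x Lc0 hlo Bx) _; rewrite (rho0 hm) mulr0 addr0.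
    apply: (infc_ge Bx) => a Ba; have := hLc x a Bx Ba.
    by rewrite ler_norml => /andP[_ h]; lra.
  by rewrite clamp_id //; apply: Mub.
Qed.

End Mc.

Section Ball.
Context {R : realType} {d : measure_display} {X : measurableType d}
  (rho : X -> X -> R) (mu : {measure set X -> \bar R})
  (delta : (X -> R) -> (X -> R)) (hm : is_metric rho) (hd : derivation rho mu delta).

Lemma dbar_ball f x0 r : Lip rho f -> 0 < r ->
  {ae mu, forall x, \1_(rball rho x0 r) x * dbarf rho delta f x
     = \1_(rball rho x0 r) x * delta (mcshane rho (rball rho x0 r) f) x}.
Proof.
move=> hf r0; have [hLB heq] := mcshane_props hm x0 hf r0.
have := dbar_loc hm hd (Lip_Lip_loc hf) (ropen_ball hm (x0:=x0) (r:=r)) hLB heq.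
apply: filterS => x hx; have [Bx|Bx] := pselect (rball rho x0 r x).
  by rewrite hx.
by rewrite indicE memNset // mul0r mul0r.
Qed.

End Ball.


Section Sep.
Context {R : realType} {d : measure_display} {X : measurableType d}
  (rho : X -> X -> R) (mu : {measure set X -> \bar R})
  (delta : (X -> R) -> (X -> R)) (hm : is_metric rho) (hd : derivation rho mu delta).

Lemma ae_countable (I : Type) (D : set I) (P : I -> X -> Prop) : countable D ->
  (forall i, D i -> {ae mu, forall x, P i x}) -> {ae mu, forall x, forall i, D i -> P i x}.
Proof.
move/countable_injP => [e he] h.
have H : forall n, {ae mu, forall x, forall i, D i -> e i = n -> P i x}.
  move=> n; have [[i [Di ein]]|nex] := pselect (exists i, D i /\ e i = n).
    apply: filterS (h i Di) => x Pi j Dj ejn.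
    have -> : j = i by apply: he; rewrite ?inE //; rewrite ejn ein.
    exact: Pi.
  by apply: aeW => x j Dj ejn; exfalso; apply: nex; exists j.
apply: filterS (ae_foralln H) => x hx i Di; exact: hx (e i) i Di erefl.
Qed.

Definition pd (f : X -> R) (L : R) (c : X) := fun y => clamp 1 ((f y - f c) / L).

Lemma pd_LB f L c : Lip rho f -> LB rho (pd f L c).
Proof.
move=> [K [K0 hK]]; apply: LB_clamp; first exact: ler01.
exists (K * `|L^-1|); split; first by rewrite mulr_ge0.
move=> x y _ _; have -> : (f x - f c) / L - (f y - f c) / L = (f x - f y) * L^-1 by ring.
rewrite normrM mulrAC; apply: ler_wpM2r => //; exact: hK.
Qed.

Lemma pd_lip1 f c : is_lip_on rho setT f (lipc rho f) ->
  is_lip_on rho setT (pd f (lipc rho f) c) 1.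
Proof.
set L := lipc rho f; move=> [L0 hL]; split => // x y _ _; rewrite mul1r.
apply: le_trans (clamp_dist _ _ _) _.
have [->|Ln0] := eqVneq L 0.
  by rewrite invr0 !mulr0 subrr normr0 (rho_ge0 hm).
have Lp : 0 < L by rewrite lt_neqAle eq_sym Ln0 L0.
have -> : (f x - f c) / L - (f y - f c) / L = (f x - f y) / L by field.
rewrite normrM normfV (gtr0_norm Lp) ler_pdivrMr //.
by rewrite mulrC; apply: hL.
Qed.

Lemma pd_norm f c : is_lip_on rho setT f (lipc rho f) ->
  lipnorm rho (pd f (lipc rho f) c) <= 1.
Proof.
move=> hL; rewrite /lipnorm ge_max; apply/andP; split.
  apply: ge_sup; first by exists `|pd f (lipc rho f) c c|, c.
  by move=> _ [y _ <-]; apply: clamp_bound.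
rewrite /lipc /lipc_on; apply: ge_inf; first by exists 0 => z [].
exact: pd_lip1.
Qed.

Lemma pd_eq f c y : is_lip_on rho setT f (lipc rho f) -> rball rho c 1 y ->
  f y = lipc rho f * pd f (lipc rho f) c y + f c * 1.
Proof.
set L := lipc rho f; move=> [L0 hL]; rewrite /rball /= => cy.
have h := hL y c I I; rewrite (rho_sym hm) in h.
have [L00|Ln0] := eqVneq L 0.
  rewrite L00 mul0r in h; rewrite L00 mul0r add0r mulr1.
  by apply/eqP; rewrite -subr_eq0 -normr_le0.
have Lp : 0 < L by rewrite lt_neqAle eq_sym Ln0 L0.
rewrite /pd clamp_id.
  by rewrite mulrC divfK // mulr1 subrK.
rewrite normrM normfV (gtr0_norm Lp) ler_pdivrMr // mul1r.
apply: le_trans h _; rewrite ler_piMr //; exact: ltW.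
Qed.

Lemma dbar_bound f : rseparable rho -> Lip rho f ->
  (Linf_norm mu (dbarf rho delta f) <= opnorm rho mu delta * (lipc rho f)%:E)%E.
Proof.
move=> [D [cD dD]] hf.
have [L0 [L00 hL0]] := hf.
have hL : is_lip_on rho setT f (lipc rho f).
  by apply: (lipc_att hm (L0 := L0)); split.
set L := lipc rho f.
have [Lp _] := hL.
have H : forall c, D c -> {ae mu, forall x, rball rho c 1 x ->
    (`|dbarf rho delta f x|%:E <= opnorm rho mu delta * L%:E)%E}.
  move=> c Dc.
  have hp := pd_LB L c hf.
  set g := fun y => L * pd f L c y + f c * (fun _ => 1) y.
  have hg : LB rho g by apply: LB_lin => //; exact: LB_cst.
  have E : forall y, rball rho c 1 y -> g y = f y.
    by move=> y cy; rewrite /g /= -pd_eq.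
  have e1 := dbar_loc hm hd (Lip_Lip_loc hf) (ropen_ball hm (x0:=c) (r:=1)) hg E.
  have e2 := der_lin hd L (f c) hp (LB_cst rho 1).
  have e3 := der_one hd.
  have e4 := ess_sup_ge mu (fun x => (`|delta (pd f L c) x|)%:E).
  have e34 : {ae mu, forall x, delta (fun=> 1) x = 0 /\ (`|delta (pd f L c) x|%:E <= ess_sup mu (fun x => (`|delta (pd f L c) x|)%:E))%E}.
    by move: e3 e4; apply: filterS2 => x a b; split.
  move: e1 e2 e34; apply: filterS3 => x h1 h2 [h3 h4] cx.
  rewrite (h1 cx) h2 h3 mulr0 addr0 normrM (ger0_norm Lp) EFinM muleC.
  apply: lee_wpmul2r; first by rewrite lee_fin.
  apply: le_trans h4 _.
  apply: ereal_sup_ubound; exists (pd f L c) => //; split.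
    exact/LB_Lip_b.
  exact: pd_norm.
have := ae_countable cD H => hall.
apply/ess_supP; apply: filterS hall => x hx.
have [c Dc xc] := dD x 1 ltr01.
apply: (hx c Dc); by rewrite /rball /= (rho_sym hm).
Qed.

End Sep.


Theorem theorem2p15 (R : realType) (d : measure_display) (X : measurableType d)
  (rho : X -> X -> R) (mu : {measure set X -> \bar R})
  (delta : (X -> R) -> (X -> R)) :
  is_metric rho -> borel_rho rho -> radon rho mu -> derivation rho mu delta ->
  exists dbar : (X -> R) -> (X -> R),
    [/\ forall f, Lip_loc rho f -> Linf_loc rho mu (dbar f),
        forall f g (a b : R), Lip_loc rho f -> Lip_loc rho g ->
          {ae mu, forall x, dbar (fun y => a * f y + b * g y) x
                            = a * dbar f x + b * dbar g x},
        forall f, Lip_b rho f -> {ae mu, forall x, dbar f x = delta f x},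
        forall f (x0 : X) (r : R), Lip rho f -> 0 < r ->
          {ae mu, forall x, \1_(rball rho x0 r) x * dbar f x
             = \1_(rball rho x0 r) x * delta (mcshane rho (rball rho x0 r) f) x} &
        forall f g, Lip_loc rho f -> Lip_loc rho g ->
          {ae mu, forall x, dbar (fun y => f y * g y) x
                            = f x * dbar g x + g x * dbar f x}] /\
    (rseparable rho -> forall f, Lip rho f ->
          (Linf_norm mu (dbar f) <= opnorm rho mu delta * (lipc rho f)%:E)%E).
Proof.
move=> hm _ _ hd.
exists (dbarf rho delta); split; first split.
- by move=> f hf; apply: dbar_Linf_loc.
- by move=> f g a b hf hg; apply: dbar_lin.
- move=> f hf; have hf' := proj2 (LB_Lip_b rho f) hf.
  have := dbar_loc hm hd (Lip_Lip_loc (LB_Lip hf')) (ropenT rho) hf' (fun _ _ => erefl).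
  by apply: filterS => x h; apply: h.
- by move=> f x0 r hf r0; apply: dbar_ball.
- by move=> f g hf hg; apply: dbar_mul.
- by move=> hs f hf; apply: dbar_bound.
Qed.
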